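(* Let $G$ be a $k$-cozy graph whose edge connectivity $\kappa'(G)$ satisfies $\kappa'(G)<k$. Then $\kappa'(G)$ is even.
   Context: An undirected graph $G$ is $k$-cozy if it is connected, $k$-regular, and equipped with a $1$-factorization, i.e., an assignment of colors from $\{1,\dots,k\}$ to its edges such that the $k$ edges incident at each vertex receive distinct colors. The edge connectivity $\kappa'(G)$ is the minimum number of edges whose removal disconnects $G$. *)

(* Defs.v *)
From mathcomp Require Import all_boot.
Set Implicit Arguments. Unset Strict Implicit. Unset Printing Implicit Defensive.

Section Graphs.
Variable T : finType.

Definition simple_graph (e : rel T) : Prop := symmetric e /\ irreflexive e.

Definition edge_set (e : rel T) : {set {set T}} :=
  [set [set x; y] | x in T, y in T & e x y].

Definition connected_graph (e : rel T) : Prop := forall x y : T, connect e x y.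

Definition regular (k : nat) (e : rel T) : Prop :=
  forall v : T, #|[set u | e v u]| = k.

(* 1-factorization: colouring of edges with k colours ('I_k ~ {1..k})
   such that the edges at each vertex receive distinct colours *)
Definition one_factorization (k : nat) (e : rel T) (c : {set T} -> 'I_k) : Prop :=
  forall v u w : T, e v u -> e v w -> u != w -> c [set v; u] != c [set v; w].

Definition cozy (k : nat) (e : rel T) (c : {set T} -> 'I_k) : Prop :=
  [/\ simple_graph e, connected_graph e, regular k e & one_factorization e c].

Definition remove_edges (e : rel T) (F : {set {set T}}) : rel T :=
  fun x y => e x y && ([set x; y] \notin F).

Definition disconnecting_set (e : rel T) (F : {set {set T}}) : Prop :=
  F \subset edge_set e /\ exists x y : T, ~~ connect (remove_edges e F) x y.

Definition edge_connectivity (e : rel T) (n : nat) : Prop :=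
  (exists2 F, disconnecting_set e F & #|F| = n) /\
  (forall F, disconnecting_set e F -> n <= #|F|).
End Graphs.

(* Main.v *)
Require Import Defs.
From mathcomp Require Import all_boot.
Set Implicit Arguments. Unset Strict Implicit. Unset Printing Implicit Defensive.

Section Aux.
Variables (T : finType) (k : nat) (e : rel T) (c : {set T} -> 'I_k).
Hypotheses (esym : symmetric e) (eirr : irreflexive e) (reg : regular k e)
  (ofac : one_factorization e c).

Lemma col_uniq v u w : e v u -> e v w -> c [set v; u] = c [set v; w] -> u = w.
Proof.
move=> evu evw H; case: (eqVneq u w) => // /(ofac evu evw); by rewrite H eqxx.
Qed.

Lemma col_exists v (i : 'I_k) : exists u, e v u && (c [set v; u] == i).
Proof.
have inj : {in [set u | e v u] &, injective (fun u => c [set v; u])}.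
  by move=> u w; rewrite !inE => evu evw; apply: col_uniq.
have Hc := card_in_imset inj; rewrite reg in Hc.
have Himg : (fun u => c [set v; u]) @: [set u | e v u] = setT.
  by apply/eqP; rewrite eqEcard subsetT cardsT card_ord Hc leqnn.
have : i \in (fun u => c [set v; u]) @: [set u | e v u] by rewrite Himg inE.
case/imsetP => u; rewrite inE => evu ->; exists u; by rewrite evu eqxx.
Qed.

Definition pp (i : 'I_k) v := odflt v [pick u | e v u && (c [set v; u] == i)].

Lemma ppP i v : e v (pp i v) && (c [set v; pp i v] == i).
Proof.
rewrite /pp; case: pickP => [u Hu | H] //=.
have [u Hu] := col_exists v i; by rewrite H in Hu.
Qed.

Lemma pp_uniq i v u : e v u -> c [set v; u] = i -> pp i v = u.
Proof.
move=> evu cu; have /andP[h1 /eqP h2] := ppP i v; apply: col_uniq h1 evu _.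
by rewrite h2 cu.
Qed.

Lemma ppK i : involutive (pp i).
Proof.
move=> v; apply: pp_uniq.
  by rewrite esym; case/andP: (ppP i v).
by rewrite setUC; case/andP: (ppP i v) => _ /eqP.
Qed.

Lemma pp_neq i v : pp i v != v.
Proof. case/andP: (ppP i v) => h _; apply: contraTneq h => ->; by rewrite eirr. Qed.

Definition cut (S : {set T}) := [set E : {set T} |
  [exists x in S, exists y in ~: S, e x y && (E == [set x; y])]].
Definition cutc S i := [set E in cut S | c E == i].

Lemma cutc_card S i : odd #|cutc S i| = odd #|S|.
Proof.
set Sout := [set v in S | pp i v \notin S].
set Sin := [set v in S | pp i v \in S].
set A := [set v in Sin | enum_rank v < enum_rank (pp i v)].
have e1 : #|S| = #|Sin| + #|Sout|.
  rewrite -(cardsID [set v | pp i v \in S] S); congr (_ + _);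
  by apply: eq_card => v; rewrite !inE; case: (v \in S); case: (pp i v \in S).
have e2 : #|Sin| = #|A| + #|A|.
  rewrite -(cardsID A Sin).
  have -> : Sin :&: A = A.
    by apply/setP => v; rewrite !inE; case: (v \in S); rewrite ?andbF //= andbA andbb.
  congr (_ + _).
  have -> : Sin :\: A = pp i @: A.
    apply/setP => v; apply/idP/idP.
      rewrite !inE => /andP [H /andP [vS pvS]]; apply/imsetP; exists (pp i v); last by rewrite ppK.
      rewrite !inE ppK vS pvS /=; rewrite vS pvS /= in H.
      rewrite ltn_neqAle leqNgt H andbT.
      apply/eqP => /val_inj /enum_rank_inj; apply/eqP; exact: pp_neq.
    case/imsetP => w; rewrite !inE => /andP [/andP [wS pwS] lt] ->.
    by rewrite pwS ppK wS /= -leqNgt ltnW.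
  apply: card_imset; exact: inv_inj (ppK i).
have e3 : #|cutc S i| = #|Sout|.
  have -> : cutc S i = (fun v => [set v; pp i v]) @: Sout.
    apply/setP => E; apply/idP/idP.
      rewrite !inE => /andP [/exists_inP [x xS /exists_inP [y yS /andP [exy /eqP EE]]] cE].
      rewrite inE in yS.
      have pxy : pp i x = y by apply: pp_uniq => //; rewrite -EE; apply/eqP.
      apply/imsetP; exists x; last by rewrite EE pxy.
      by rewrite inE xS pxy yS.
    case/imsetP => v; rewrite inE => /andP [vS pvS] ->.
    rewrite !inE; case/andP: (ppP i v) => evp ->; rewrite andbT.
    apply/exists_inP; exists v => //; apply/exists_inP; exists (pp i v); first by rewrite inE.
    by rewrite evp eqxx.
  apply: card_in_imset => v w; rewrite !inE => /andP [vS pvS] /andP [wS pwS] H.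
  have : v \in [set w; pp i w] by rewrite -H set21.
  rewrite !inE => /orP [/eqP // | /eqP vp]; by rewrite -vp vS in pwS.
by rewrite e3 e1 e2 oddD addnn odd_double.
Qed.

Lemma cut_sum S : #|cut S| = \sum_(i < k) #|cutc S i|.
Proof.
rewrite -sum1_card (partition_big c predT) //=; apply: eq_bigr => i _.
rewrite -sum1_card; apply: eq_bigl => E; by rewrite [RHS]inE.
Qed.

End Aux.

Theorem mainTheorem11 (T : finType) (k : nat) (e : rel T) (c : {set T} -> 'I_k)
  (n : nat) :
  cozy e c -> edge_connectivity e n -> n < k -> ~~ odd n.
Proof.
move=> [[esym eirr] conn reg ofac] [[F [Fsub [x [y nxy]]] cardF] Fmin] nk.
set eF := remove_edges e F.
set S := [set z | connect eF x z].
have cutF : cut e S \subset F.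
  apply/subsetP => E; rewrite inE => /exists_inP [z zS /exists_inP [w wS /andP [ezw /eqP ->]]].
  rewrite !inE in zS wS; apply: contraNT wS => nF.
  apply: connect_trans zS (connect1 _); by rewrite /eF /remove_edges ezw nF.
have disc : disconnecting_set e (cut e S).
  split.
    apply/subsetP => E; rewrite inE => /exists_inP [z _ /exists_inP [w _ /andP [ezw /eqP ->]]].
    by apply/imset2P; exists z w; rewrite ?inE.
  exists x, y; apply: contra nxy => cxy.
  have clos : closed (remove_edges e (cut e S)) (mem S).
    move=> z w; rewrite /remove_edges => /andP [ezw nc]; rewrite !inE.
    apply/idP/idP => H; apply/negPn; apply: contra nc => nH; rewrite inE.
      apply/exists_inP; exists z; first by rewrite inE.
      apply/exists_inP; exists w; first by rewrite !inE.
      by rewrite ezw eqxx.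
    apply/exists_inP; exists w; first by rewrite inE.
    apply/exists_inP; exists z; first by rewrite !inE.
    by rewrite esym ezw setUC eqxx.
  have := closed_connect clos cxy; rewrite !inE connect0 => <-. done.
have cardC : #|cut e S| = n.
  by apply/eqP; rewrite eqn_leq Fmin // -cardF subset_leq_card.
rewrite -cardC (cut_sum e c).
case: (boolP (odd #|S|)) => oS.
  exfalso; move: nk; rewrite -cardC (cut_sum e c) ltnNge; apply/negP/negPn.
  rewrite -[X in X <= _]card_ord -sum1_card; apply: leq_sum => i _.
  have := cutc_card esym eirr reg ofac S i; rewrite oS.
  by case: #|_|.
apply: (big_ind (fun m => ~~ odd m)) => //.
  by move=> a b Ha Hb; rewrite oddD (negbTE Ha) (negbTE Hb).
by move=> i _; rewrite (cutc_card esym eirr reg ofac).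
Qed.
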